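(* Let $G$ be a non-cyclic finite group of order $n$. Then $$\psi(G)\leq \frac{7}{11}\,\psi(C_n).$$
   Context: For a finite group $G$, $\psi(G)=\sum_{g\in G} o(g)$ denotes the sum of the orders of all elements of $G$. $C_n$ denotes the cyclic group of order $n$. *)

(* Defs.v *)
From mathcomp Require Import all_boot all_fingroup all_algebra all_solvable.
Set Implicit Arguments. Unset Strict Implicit. Unset Printing Implicit Defensive.
Local Open Scope group_scope.

Definition psi (gT : finGroupType) (G : {set gT}) : nat := (\sum_(x in G) #[x])%N.

(* psi(C_n): C_n realised as the cyclic group Zp n (of order n for n >= 1)
   inside the additive group of 'Z_n. *)
Definition psi_cyclic (n : nat) : nat := psi (Zp n).

(* Main.v *)
Require Import Defs.
From mathcomp Require Import all_boot all_fingroup all_algebra all_solvable.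
From mathcomp Require Import zify.
Set Implicit Arguments. Unset Strict Implicit. Unset Printing Implicit Defensive.

Definition g (n : nat) : nat := (\sum_(i < n) n %/ gcdn n i)%N.

Section Cyc.
Local Open Scope group_scope.
Variable gT : finGroupType.

Lemma cycle_imset (x : gT) : <[x]> = [set x ^+ (val i) | i : 'I_#[x]].
Proof.
apply/setP=> y; apply/idP/imsetP.
  by case/cyclePmin=> i lti ->; exists (Ordinal lti).
by case=> i _ ->; apply: mem_cycle.
Qed.

Lemma psi_cycle (x : gT) : psi <[x]> = g #[x].
Proof.
rewrite /psi cycle_imset big_imset /=; last first.
  move=> i j _ _ /eqP; rewrite eq_expg_mod_order !modn_small // => /eqP.
  by move/val_inj.
by apply: eq_bigr => i _; rewrite orderXgcd.
Qed.

Lemma psi_cyclic_group (G : {group gT}) : cyclic G -> psi G = g #|G|.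
Proof. by case/cyclicP=> x ->; rewrite psi_cycle. Qed.

End Cyc.

Lemma Zp_cyc n : cyclic (Zp n).
Proof.
rewrite /Zp; case: ifP => _; last exact: cyclic1.
by rewrite Zp_cycle cycle_cyclic.
Qed.

Lemma psi_cyclicE n : 0 < n -> psi_cyclic n = g n.
Proof. by move=> n0; rewrite /psi_cyclic psi_cyclic_group ?Zp_cyc ?card_Zp. Qed.
Lemma gcdM a b i : coprime a b -> gcdn (a * b) i = (gcdn a i * gcdn b i)%N.
Proof.
move=> cab; apply/eqP; rewrite eqn_dvd; apply/andP; split.
  rewrite muln_gcdl muln_gcdr muln_gcdr.
  rewrite !dvdn_gcd dvdn_gcdl /= (dvdn_mull _ (dvdn_gcdr _ _)).
  by rewrite (dvdn_mulr _ (dvdn_gcdr _ _)) (dvdn_mulr _ (dvdn_gcdr _ _)).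
have cg : coprime (gcdn a i) (gcdn b i).
  by apply: (coprime_dvdl (dvdn_gcdl a i)); apply: (coprime_dvdr (dvdn_gcdl b i)).
rewrite dvdn_gcd dvdn_mul ?dvdn_gcdl //=.
by rewrite Gauss_dvd // !dvdn_gcdr.
Qed.

Lemma termM a b i : 0 < a -> 0 < b -> coprime a b ->
  ((a * b) %/ gcdn (a * b) i = (a %/ gcdn a i) * (b %/ gcdn b i))%N.
Proof.
move=> a0 b0 cab; rewrite gcdM //.
have ga : 0 < gcdn a i by rewrite gcdn_gt0 a0.
have gb : 0 < gcdn b i by rewrite gcdn_gt0 b0.
rewrite -{1}(divnK (dvdn_gcdl a i)) -{1}(divnK (dvdn_gcdl b i)).
by rewrite mulnACA mulnK // muln_gt0 ga gb.
Qed.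

Lemma gM a b : 0 < a -> 0 < b -> coprime a b -> g (a * b) = (g a * g b)%N.
Proof.
move=> a0 b0 cab.
pose h (j : 'I_(a * b)) : 'I_a * 'I_b :=
  (Ordinal (ltn_pmod j a0), Ordinal (ltn_pmod j b0)).
have hinj : injective h.
  move=> j k [/eqP e1 /eqP e2]; apply: val_inj => /=.
  have : j == k %[mod a * b] by rewrite chinese_remainder // e1 e2.
  by rewrite !modn_small // => /eqP.
have hbij : bijective h by apply: inj_card_bij => //; rewrite card_prod !card_ord.
rewrite /g big_distrlr /= pair_bigA /=.
rewrite (reindex h) /=; last by apply: onW_bij.
apply: eq_bigr => j _; rewrite termM //.
by rewrite -(gcdn_modr a j) -(gcdn_modr b j).
Qed.

Section PP.
Local Open Scope group_scope.
Variable gT : finGroupType.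

Lemma pp_sub (u : gT) p : <[u ^+ p]> \subset <[u]>.
Proof. exact: cycleX. Qed.

Lemma pp_card (u : gT) p k : prime p -> #[u] = (p ^ k.+1)%N -> #[u ^+ p] = (p ^ k)%N.
Proof.
move=> pp ou; rewrite orderXdiv ou ?expnS ?mulKn ?prime_gt0 //.
by rewrite dvdn_mulr.
Qed.

Lemma pp_gen (u : gT) p k y : prime p -> #[u] = (p ^ k.+1)%N ->
  y \in <[u]> -> y \notin <[u ^+ p]> -> #[y] = #[u].
Proof.
move=> pp ou /cycleP[i ->] yn.
have npi : ~~ (p %| i).
  apply: contra yn => /dvdnP[j ->]; by rewrite mulnC expgM mem_cycle.
have ci : coprime #[u] i by rewrite ou coprime_pexpl // prime_coprime.
by rewrite orderXgcd (eqP ci) divn1.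
Qed.

Lemma psi_pp (u : gT) p k : prime p -> #[u] = (p ^ k.+1)%N ->
  psi <[u]> = (psi <[u ^+ p]> + (p ^ k.+1 - p ^ k) * p ^ k.+1)%N.
Proof.
move=> pp ou; rewrite /psi (big_setID <[u ^+ p]>) /=.
rewrite (setIidPr (pp_sub u p)); congr (_ + _)%N.
rewrite (eq_bigr (fun _ => #[u])); last first.
  by move=> y; rewrite inE => /andP[yn yu]; rewrite (pp_gen pp ou).
rewrite sum_nat_const cardsD (setIidPr (pp_sub u p)) -!orderE.
by rewrite ou (pp_card pp ou).
Qed.

End PP.

Lemma g_pp p k : prime p -> g (p ^ k.+1) = (g (p ^ k) + (p ^ k.+1 - p ^ k) * p ^ k.+1)%N.
Proof.
move=> pp.
have n0 : 0 < p ^ k.+1 by rewrite expn_gt0 prime_gt0.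
have [u Zu] := cyclicP (Zp_cyc (p ^ k.+1)).
have ou : #[u]%g = (p ^ k.+1)%N by rewrite orderE -Zu card_Zp.
by have := psi_pp pp ou; rewrite !psi_cycle ou (pp_card pp ou).
Qed.

Lemma g1 : g 1 = 1%N.
Proof. by rewrite /g big_ord1. Qed.

Lemma g_le n : g n <= n * n.
Proof.
rewrite /g -[X in _ <= X * _]card_ord -sum_nat_const.
by apply: leq_sum => i _; apply: leq_div.
Qed.

Lemma g_gt0 n : 0 < n -> 0 < g n.
Proof.
case: n => // n _; rewrite /g big_ord_recl /= gcdn0 divnn /=.
by rewrite addSn.
Qed.

Lemma g_ppS p k : prime p -> g (p ^ k.+1) = (g (p ^ k) + (p * p - p) * (p ^ k * p ^ k))%N.
Proof.
move=> pp; rewrite g_pp // expnS; congr (_ + _)%N.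
rewrite mulnBl; nia.
Qed.

Lemma g_closed p k : prime p -> ((p + 1) * g (p ^ k) = p ^ (2 * k + 1) + 1)%N.
Proof.
move=> pp; elim: k => [|k IH]; first by rewrite expn0 g1 muln1 expn1.
rewrite g_ppS // mulnDr IH.
have -> : (2 * k.+1 + 1 = (2 * k + 1).+2)%N by lia.
rewrite !expnS expnD expn1 expnM.
have p1 : 1 <= p by rewrite prime_gt0.
have -> : (p ^ 2 = p * p)%N by rewrite expnS expn1.
rewrite expnMn.
set X := p ^ k.
have: p <= p * p by rewrite leq_pmull.
nia.
Qed.

Lemma g_split p n : 0 < n -> g n = (g (n`_p) * g (n`_p^'))%N.
Proof.
move=> n0; rewrite -{1}(partnC p n0) gM ?part_gt0 //.
exact: coprime_partC.
Qed.

Lemma g_lower n q : 0 < n -> 0 < q -> (forall r, prime r -> r %| n -> r <= q) ->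
  2 * (n * n) <= (q + 1) * g n.
Proof.
elim: n {-2}n (leqnn n) q => [|N IH] n le_nN q n0 q0 hq.
  by move: le_nN; rewrite leqn0 => /eqP e; rewrite e in n0.
have [n1|n1] := leqP n 1.
  have -> : n = 1%N by apply/eqP; rewrite eqn_leq n1 n0.
  by rewrite g1; lia.
set p := max_pdiv n.
have pp : prime p := max_pdiv_prime n1.
have pn : p \in \pi(n) by rewrite pi_max_pdiv.
have pq : p <= q by apply: hq => //; exact: max_pdiv_dvd.
set m := n`_p^'.
have m0 : 0 < m := part_gt0 _ _.
have np1 : 1 < n`_p by rewrite p_part_gt1.
have mn : m < n.
  rewrite -[X in _ < X](partnC p n0) -/m -{1}(mul1n m) ltn_pmul2r //.
have cop : coprime (n`_p) m := coprime_partC _ _ _.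
have pdp : p %| n`_p.
  by rewrite p_part dvdn_exp // logn_gt0.
have hm : 2 * (m * m) <= p * g m.
  have -> : p = (p.-1 + 1)%N by rewrite addn1 prednK ?prime_gt0.
  apply: IH.
  - by rewrite -ltnS; apply: leq_trans mn le_nN.
  - exact: m0.
  - by rewrite -ltnS prednK ?prime_gt1 ?prime_gt0.
  move=> r pr rm; rewrite -ltnS prednK ?prime_gt0 // ltn_neqAle.
  have rn : r %| n by rewrite -(partnC p n0) dvdn_mull.
  rewrite max_pdiv_max ?andbT; last by rewrite mem_primes pr n0 rn.
  apply/eqP=> er; move: cop; rewrite /coprime; move/eqP.
  have : p %| gcdn (n`_p) m by rewrite dvdn_gcd pdp -er.
  by move=> /[swap] ->; rewrite dvdn1 => /eqP p1; rewrite p1 in pp.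
rewrite (g_split p n0) -/m -{1 2}(partnC p n0) -/m p_part.
set a := logn p n.
have cl := g_closed a pp.
set X := p ^ a in cl *.
set Y := g X in cl *.
set Z := g m in hm *.
have e : (p ^ (2 * a + 1) = p * X * X)%N.
  by rewrite addn1 expnS -mulnA /X -expnD addnn -mul2n.
rewrite e in cl.
have h1 : (p + 1) * (Y * Z) <= (q + 1) * (Y * Z) by rewrite leq_mul2r leq_add2r pq orbT.
have h2 : ((p + 1) * (Y * Z) = (p * X * X + 1) * Z)%N by rewrite mulnA cl.
have h3 : X * X * (2 * (m * m)) <= X * X * (p * Z) by rewrite leq_mul2l hm orbT.
apply: leq_trans h1; rewrite h2.
have -> : (2 * (X * m * (X * m)) = X * X * (2 * (m * m)))%N by lia.
apply: (leq_trans h3); rewrite mulnDl; apply: leq_trans (leq_addr _ _).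
apply: eq_leq; nia.
Qed.

Lemma g_pp_ratio p k : prime p -> (p * p - p + 1) * g (p ^ k) <= g (p ^ k.+1).
Proof.
move=> pp; rewrite g_ppS //.
have := g_le (p ^ k); set X := p ^ k; set Y := g X => hY.
rewrite mulnDl mul1n addnC leq_add2l.
by rewrite leq_mul2l hY orbT.
Qed.

Lemma g_div p n : prime p -> 0 < n -> p %| n ->
  (p * p - p + 1) * g (n %/ p) <= g n.
Proof.
move=> pp n0 pn.
have pin : p \in \pi(n) by rewrite mem_primes pp n0 pn.
have : 0 < logn p n by rewrite logn_gt0.
case ea: (logn p n) => [|k] // _.
set m := n`_p^'.
have m0 : 0 < m := part_gt0 _ _.
have cop : coprime (n`_p) m := coprime_partC _ _ _.
have en : n = (p ^ k.+1 * m)%N by rewrite -ea -p_part partnC.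
have enp : (n %/ p = p ^ k * m)%N.
  by rewrite en expnS -mulnA mulKn ?prime_gt0.
have copk : coprime (p ^ k) m.
  apply: coprime_dvdl cop; by rewrite p_part ea dvdn_exp2l.
have pk0 : forall j, 0 < p ^ j by move=> j; rewrite expn_gt0 prime_gt0.
have copk1 : coprime (p ^ k.+1) m by rewrite -ea -p_part.
rewrite enp en (gM (pk0 _) m0 copk) (gM (pk0 _) m0 copk1).
by rewrite mulnA leq_mul2r g_pp_ratio ?orbT.
Qed.

Lemma g_mono d n : 0 < n -> d %| n -> d < n -> 3 * g d <= g n.
Proof.
elim: n {-2}n (leqnn n) d => [|N IH] n le_nN d n0 dn ltdn.
  by move: le_nN; rewrite leqn0 => /eqP e; rewrite e in n0.
have d0 : 0 < d by apply: dvdn_gt0 dn.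
have nd1 : 1 < n %/ d.
  by rewrite ltn_divRL // mul1n.
set p := pdiv (n %/ d).
have pp : prime p := pdiv_prime nd1.
have pnd : p %| n %/ d := pdiv_dvd _.
have pn : p %| n by apply: (dvdn_trans pnd); apply: dvdn_div.
have hdiv := g_div pp n0 pn.
have np0 : 0 < n %/ p by rewrite divn_gt0 ?prime_gt0 // dvdn_leq.
have p3 : 3 <= p * p - p + 1.
  have := prime_gt1 pp; nia.
have h3 : 3 * g (n %/ p) <= g n.
  apply: leq_trans hdiv; by rewrite leq_mul2r p3 orbT.
have dnp : d %| n %/ p.
  rewrite -(divnK dn) -(divnK pnd) mulnAC mulnK ?prime_gt0 //.
  by rewrite dvdn_mull.
have [e|ne] := eqVneq d (n %/ p); first by rewrite e.
have ltd : d < n %/ p by rewrite ltn_neqAle ne dvdn_leq.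
have lt1 : n %/ p < n by rewrite ltn_Pdiv ?prime_gt1.
have le1 : n %/ p <= N by rewrite -ltnS; apply: leq_trans lt1 le_nN.
have := IH (n %/ p) le1 d np0 dnp ltd.
move=> h; apply: leq_trans h _; apply: leq_trans h3; exact: leq_pmull.
Qed.

Lemma g_r q k : prime q -> 3 <= q -> 7 * q * g (q ^ k) <= 3 * g (q ^ k.+1).
Proof.
move=> pq q3; rewrite g_ppS //.
have := g_le (q ^ k); set X := q ^ k; set Y := g X => hY.
have h1 : (7 * q - 3) * Y <= (7 * q - 3) * (X * X) by rewrite leq_mul2l hY orbT.
have h2 : 7 * q - 3 <= 3 * (q * q - q) by nia.
have h3 : (7 * q - 3) * (X * X) <= 3 * (q * q - q) * (X * X) by rewrite leq_mul2r h2 orbT.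
nia.
Qed.

Lemma g_two k : (3 * g (2 ^ k) = 2 * 4 ^ k + 1)%N.
Proof.
have := g_closed k (isT : prime 2); rewrite addn1 => ->.
by rewrite expnD expnM mulnC.
Qed.

Lemma chebyshev (T : finType) (A : {pred T}) (a b : T -> nat) :
  (forall i j, i \in A -> j \in A ->
     (a i <= a j /\ b j <= b i) \/ (a j <= a i /\ b i <= b j)) ->
  #|A| * (\sum_(i in A) a i * b i) <= (\sum_(i in A) a i) * (\sum_(i in A) b i).
Proof.
move=> hab.
set S := \sum_(i in A) a i * b i.
have e1 : (2 * (#|A| * S) =
          \sum_(i in A) \sum_(j in A) (a i * b i + a j * b j))%N.
  rewrite (eq_bigr (fun i => #|A| * (a i * b i) + S)%N); last first.
    by move=> i _; rewrite big_split /= sum_nat_const.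
  rewrite big_split /= sum_nat_const -big_distrr /= -/S; lia.
have e2 : (2 * ((\sum_(i in A) a i) * (\sum_(i in A) b i)) =
          \sum_(i in A) \sum_(j in A) (a i * b j + a j * b i))%N.
  rewrite [RHS](eq_bigr (fun i => a i * (\sum_(j in A) b j) + (\sum_(j in A) a j) * b i)%N); last first.
    by move=> i _; rewrite big_split /= -big_distrr -big_distrl.
  rewrite big_split /= -big_distrl -big_distrr /=; lia.
rewrite -(leq_pmul2l (isT : 0 < 2)) e1 e2.
apply: leq_sum => i iA; apply: leq_sum => j jA.
case: (hab i j iA jA) => [[h1 h2]|[h1 h2]]; nia.
Qed.

Section CaseA.
Local Open Scope group_scope.
Variables (gT : finGroupType) (G Q : {group gT}) (q : nat).
Hypotheses (pq : prime q) (sylQ : q.-Sylow(G) Q) (nQ : Q <| G) (cQ : cyclic Q).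

Let sQG : Q \subset G := normal_sub nQ.
Let nQG : G \subset 'N(Q) := normal_norm nQ.

Lemma in_cyc_comm (x y z : gT) : y \in <[x]> -> z \in <[x]> -> commute y z.
Proof. by move=> /cycleP[i ->] /cycleP[j ->]; apply: commuteX2. Qed.

Lemma constt_in (x : gT) pi : x \in G -> x.`_pi \in G.
Proof. by move=> xG; have := cycle_constt pi x; apply: subsetP; rewrite cycle_subG. Qed.

Lemma cq_in x : x \in G -> x.`_q \in Q.
Proof. by move=> xG; rewrite (mem_normal_Hall sylQ nQ) ?p_elt_constt ?constt_in. Qed.

Lemma q_eltQ y : y \in Q -> q.-elt y.
Proof. by move=> yQ; apply: mem_p_elt (pHall_pgroup sylQ) yQ. Qed.

Lemma NQ x : x \in G -> x \in 'N(Q).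
Proof. by move=> xG; apply: (subsetP nQG). Qed.

Lemma coset_cq' x : x \in G -> coset Q x = coset Q (x.`_q^').
Proof.
move=> xG; rewrite -{1}(consttC q x) morphM ?NQ ?constt_in //=.
by rewrite (coset_id (cq_in xG)) mul1g.
Qed.

Lemma ord_coset_q' w : w \in G -> q^'.-elt w -> #[coset Q w] = #[w].
Proof.
move=> wG q'w; apply/eqP; rewrite eqn_dvd morph_order ?NQ //=.
rewrite order_dvdn; apply/eqP.
have wkN : w ^+ #[coset Q w] \in 'N(Q) by rewrite groupX ?NQ.
have wkQ : w ^+ #[coset Q w] \in Q.
  by apply: coset_idr => //; rewrite morphX ?NQ // expg_order.
have h1 := constt_p_elt (q_eltQ wkQ).
have : (w ^+ #[coset Q w]).`_q = 1 by apply/constt1P; apply: p_eltX.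
by rewrite h1.
Qed.

Lemma order_split x : x \in G -> #[x] = (#[x.`_q] * #[coset Q x])%N.
Proof.
move=> xG; rewrite coset_cq' // ord_coset_q' ?constt_in ?p_elt_constt //.
by rewrite !order_constt partnC.
Qed.

Definition Sc (c : coset_of Q) := (\sum_(x in G | coset Q x == c) #[x.`_q])%N.

Lemma psi_decomp : psi G = (\sum_(c in G / Q) #[c] * Sc c)%N.
Proof.
rewrite /psi (eq_bigr (fun x => #[x.`_q] * #[coset Q x])%N); last first.
  by move=> x xG; rewrite order_split.
rewrite (partition_big_imset (coset Q)) /= quotientE morphimEsub //.
apply: eq_bigr => c _; rewrite /Sc big_distrr /=.
apply: eq_bigr => x /andP[_ /eqP ->]; by rewrite mulnC.
Qed.

Definition Nc (c : coset_of Q) (y : gT) :=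
  #|[set x in G | (coset Q x == c) && (x.`_q == y)]|.

Lemma Sc_N c : Sc c = (\sum_(y in Q) #[y] * Nc c y)%N.
Proof.
rewrite /Sc (partition_big (fun x => x.`_q) (mem Q)) /=; last first.
  by move=> x /andP[xG _]; apply: cq_in.
apply: eq_bigr => y yQ.
rewrite (eq_bigr (fun _ => #[y])); last by move=> x /andP[_ /eqP ->].
rewrite sum_nat_const mulnC /Nc; congr (_ * _)%N.
by apply: eq_card => x; rewrite !inE andbA.
Qed.

Lemma fiber_card c : c \in G / Q -> #|[set x in G | coset Q x == c]| = #|Q|.
Proof.
rewrite quotientE morphimEsub // => /imsetP[x0 x0G ->].
rewrite -(card_rcoset Q x0); apply: eq_card => x; rewrite !inE.
apply/andP/idP => [[xG /eqP e]|xQ].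
  by apply/rcoset_kercosetP; rewrite ?NQ.
have xG : x \in G.
  by case/rcosetP: xQ => y yQ ->; apply: groupM => //; apply: (subsetP sQG).
by split => //; apply/eqP/rcoset_kercosetP; rewrite ?NQ.
Qed.

Lemma sum_N c : c \in G / Q -> (\sum_(y in Q) Nc c y)%N = #|Q|.
Proof.
move=> cGQ; rewrite -(fiber_card cGQ); apply/esym.
rewrite -sum1_card (partition_big (fun x => x.`_q) (mem Q)) /=; last first.
  by move=> x; rewrite inE => /andP[xG _]; apply: cq_in.
apply: eq_bigr => y yQ; rewrite sum1_card /Nc.
by apply: eq_card => x; rewrite unfold_in /= !inE andbA.
Qed.

Lemma Nc_mono c y y' : y \in Q -> y' \in <[y]> -> Nc c y <= Nc c y'.
Proof.
move=> yQ y'y.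
have y'Q : y' \in Q by apply: (subsetP _ _ y'y); rewrite cycle_subG.
set A := [set x in G | (coset Q x == c) && (x.`_q == y)].
set B := [set x in G | (coset Q x == c) && (x.`_q == y')].
pose f x := y' * x.`_q^'.
have finj : {in A &, injective f}.
  move=> x1 x2; rewrite !inE => /andP[x1G /andP[_ /eqP e1]] /andP[x2G /andP[_ /eqP e2]].
  move/mulgI => e.
  by rewrite -(consttC q x1) -(consttC q x2) e1 e2 e.
rewrite /Nc -/A -/B -(card_in_imset finj); apply: subset_leq_card.
apply/subsetP=> _ /imsetP[x xA ->]; move: xA; rewrite !inE.
case/andP=> xG /andP[/eqP xc /eqP xq].
have com : commute y' x.`_q^'.
  apply: (in_cyc_comm (x := x)); last exact: cycle_constt.
  by apply: (subsetP _ _ y'y); rewrite cycle_subG -xq cycle_constt.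
have y'G : y' \in G by apply: (subsetP sQG).
rewrite groupM ?constt_in //=; apply/andP; split.
  rewrite morphM ?NQ ?constt_in //= coset_id // mul1g -coset_cq' //.
  by rewrite xc.
rewrite consttM // constt_p_elt ?q_eltQ //.
have -> : (x.`_q^').`_q = 1 by apply/constt1P; apply: p_elt_constt.
by rewrite mulg1.
Qed.

Lemma cyc_dvd_mem y y' : y \in Q -> y' \in Q -> #[y] %| #[y'] -> y \in <[y']>.
Proof.
move=> yQ y'Q dv.
set e := #[y'] %/ #[y].
have de : e %| #[y'] by apply: dvdn_div.
have e0 : 0 < e by rewrite divn_gt0 ?order_gt0 // dvdn_leq ?order_gt0.
have oH : #[y' ^+ e] = #[y].
  by rewrite orderXdiv // {1}(esym (divnK dv)) -/e mulKn.
have sHQ : <[y' ^+ e]> \subset Q by rewrite cycle_subG groupX.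
have syQ : <[y]> \subset Q by rewrite cycle_subG.
have /eqP eq : (<[y]>%G :==: <[y' ^+ e]>%G).
  by rewrite (eq_subG_cyclic cQ) //= -!orderE oH.
have : y \in <[y' ^+ e]> by rewrite -eq cycle_id.
by apply: subsetP; apply: cycleX.
Qed.

Lemma q_order_cmp y y' : y \in Q -> y' \in Q -> (#[y] %| #[y']) || (#[y'] %| #[y]).
Proof.
move=> yQ y'Q.
have cardQ : #|Q| = (q ^ logn q #|Q|)%N by apply: card_pgroup; apply: pHall_pgroup sylQ.
have := order_dvdG yQ; have := order_dvdG y'Q; rewrite cardQ.
case/(dvdn_pfactor _ _ pq) => j _ ->; case/(dvdn_pfactor _ _ pq) => i _ ->.
case: (leqP i j) => h; first by rewrite dvdn_exp2l. by rewrite (dvdn_exp2l _ (ltnW h)) orbT.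
Qed.

Lemma Sc_le c : c \in G / Q -> Sc c <= g #|Q|.
Proof.
move=> cGQ.
have hQ0 : 0 < #|Q| := cardG_gt0 Q.
rewrite -(leq_pmul2l hQ0) Sc_N -(psi_cyclic_group cQ) /psi.
apply: (leq_trans (@chebyshev gT Q (fun y => #[y]) (Nc c) _)).
  move=> y y' yQ y'Q; case/orP: (q_order_cmp yQ y'Q) => dv.
    left; split; first exact: dvdn_leq (order_gt0 _) dv.
    by apply: Nc_mono => //; apply: cyc_dvd_mem.
  right; split; first exact: dvdn_leq (order_gt0 _) dv.
  by apply: Nc_mono => //; apply: cyc_dvd_mem.
by rewrite sum_N // mulnC.
Qed.

Lemma Nc_gen0 c y : c \notin 'C_G(Q) / Q -> y \in Q -> #[y] = #|Q| -> Nc c y = 0%N.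
Proof.
move=> cK yQ oy; apply/eqP; rewrite cards_eq0; apply/eqP/setP=> x; rewrite !inE.
apply/negbTE; apply/negP => /andP[xG /andP[/eqP xc /eqP xq]].
have eQ : <[y]> = Q.
  apply/eqP; rewrite eqEcard cycle_subG yQ /= -orderE oy leqnn.
  by [].
have wC : x.`_q^' \in 'C(Q).
  rewrite -eQ cent_cycle; apply/cent1P.
  by rewrite -xq; apply: (in_cyc_comm (x := x)); apply: cycle_constt.
have yC : y \in 'C(Q) by apply: (subsetP (cyclic_abelian cQ)).
have xC : x \in 'C_G(Q).
  by rewrite inE xG -(consttC q x) xq groupM.
by move: cK; rewrite -xc mem_quotient.
Qed.
Lemma Sc_le2 c k : c \in G / Q -> c \notin 'C_G(Q) / Q -> #|Q| = (q ^ k.+1)%N ->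
  Sc c <= q * g (q ^ k).
Proof.
move=> cGQ cK cardQ.
case/cyclicP: cQ => u eQ.
have ou : #[u] = (q ^ k.+1)%N by rewrite orderE -eQ.
set A := <[u ^+ q]>.
have sAQ : A \subset Q by rewrite eQ cycleX.
have cA : #|A| = (q ^ k)%N by rewrite -orderE (pp_card pq ou).
have A0 : 0 < #|A| by rewrite cA expn_gt0 prime_gt0.
have z : forall y, y \in Q :\: A -> Nc c y = 0%N.
  move=> y; rewrite inE => /andP[yA yQ]; apply: Nc_gen0 => //.
  by rewrite cardQ -ou; apply: (pp_gen pq ou) => //; rewrite -eQ.
have e1 : Sc c = (\sum_(y in A) #[y] * Nc c y)%N.
  rewrite Sc_N (big_setID A) /= (setIidPr sAQ) [X in (_ + X)%N]big1 ?addn0 //.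
  by move=> y yQA; rewrite (z _ yQA) muln0.
have e2 : (\sum_(y in A) Nc c y)%N = #|Q|.
  rewrite -(sum_N cGQ) [RHS](big_setID A) /= (setIidPr sAQ) [X in (_ + X)%N]big1 ?addn0 // => y yQA; by rewrite z.
have e3 : psi A = g (q ^ k) by rewrite /A psi_cycle (pp_card pq ou).
rewrite -(leq_pmul2l A0) e1.
apply: (leq_trans (@chebyshev gT A (fun y => #[y]) (Nc c) _)).
  move=> y y' yA y'A.
  have yQ := subsetP sAQ y yA; have y'Q := subsetP sAQ y' y'A.
  case/orP: (q_order_cmp yQ y'Q) => dv.
    left; split; first exact: dvdn_leq (order_gt0 _) dv.
    by apply: Nc_mono => //; apply: cyc_dvd_mem.
  right; split; first exact: dvdn_leq (order_gt0 _) dv.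
  by apply: Nc_mono => //; apply: cyc_dvd_mem.
have -> : (\sum_(i in A) #[i])%N = psi A by [].
rewrite e2 e3 cardQ cA expnS; apply: eq_leq; lia.
Qed.
Lemma caseA_bound : psi G <= g #|Q| * psi (G / Q).
Proof.
rewrite psi_decomp /psi big_distrr /=; apply: leq_sum => c cGQ.
by rewrite mulnC leq_mul2r Sc_le ?orbT.
Qed.

Lemma cent_full_cyclic : cyclic (G / Q) -> 'C_G(Q) / Q = G / Q -> cyclic G.
Proof.
move=> cGQ eK.
have sQC : Q \subset 'C_G(Q) by rewrite subsetI sQG; apply: cyclic_abelian.
have sGC : G \subset 'C_G(Q) by rewrite -(quotientSGK nQG sQC) eK.
have sGC' : G \subset 'C(Q) by apply: subset_trans sGC (subsetIr _ _).
case/cyclicP: cGQ => c eGQ.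
have : c \in G / Q by rewrite eGQ cycle_id.
rewrite quotientE morphimEsub // => /imsetP[x xG xc].
set w := x.`_q^'.
have wG : w \in G by apply: constt_in.
have cw : coset Q w = c by rewrite -coset_cq'.
case/cyclicP: cQ => u eQ.
have uQ : u \in Q by rewrite eQ cycle_id.
have com : commute u w by apply: commute_sym; apply: (centP (subsetP sGC' w wG)) u uQ.
have cop : coprime #[u] #[w].
  by apply: (pnat_coprime (q_eltQ uQ)); apply: p_elt_constt.
have ow : #[w] = #|G / Q| by rewrite -(ord_coset_q' wG) ?p_elt_constt // cw eGQ.
have oz : #[u * w] = #|G|.
  rewrite orderM // ow card_quotient // [#[u]]orderE -eQ Lagrange //.
apply/cyclicP; exists (u * w); apply/eqP; rewrite eq_sym eqEcard.
by rewrite cycle_subG groupM ?(subsetP sQG u uQ) //= -[#|<[_]>|]/(#[u * w]) oz.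
Qed.
End CaseA.

Section B1.
Local Open Scope group_scope.
Variable gT : finGroupType.

Lemma B1 (G : {group gT}) q x : prime q -> x \in G -> #|G| < q * #[x] ->
  exists Q : {group gT}, [/\ q.-Sylow(G) Q, Q <| G & cyclic Q].
Proof.
move=> pq xG lt.
set H := <[x]>%G.
have sHG : H \subset G by rewrite cycle_subG.
set k := #|G : H|.
have eG : #|G| = (#[x] * k)%N by rewrite /k -(Lagrange sHG).
have k0 : 0 < k := indexg_gt0 _ _.
have kq : k < q.
  by move: lt; rewrite eG mulnC ltn_pmul2r ?order_gt0.
have nqk : ~~ (q %| k).
  by apply/negP => /(dvdn_leq k0); rewrite leqNgt kq.
have [P sylP] := Sylow_exists q H.
have sPH : P \subset H := pHall_sub sylP.
have sylPG : q.-Sylow(G) P.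
  rewrite pHallE (subset_trans sPH sHG) /= (card_Hall sylP) eG.
  rewrite partnM ?order_gt0 // (part_p'nat (n := k)) ?muln1 //.
  by rewrite p'natE.
have cP : cyclic P by apply: cyclicS sPH (cycle_cyclic x).
have nPH : H \subset 'N(P) by apply: sub_abelian_norm (cycle_abelian x) sPH.
have sHN : H \subset 'N_G(P) by rewrite subsetI sHG.
have dv := indexgS G sHN.
have hmod := card_Syl_mod G pq.
rewrite (card_Syl sylPG) in hmod.
have le : #|G : 'N_G(P)| < q by apply: leq_ltn_trans (dvdn_leq k0 dv) kq.
rewrite modn_small // in hmod.
have eN := index1g (subsetIl G 'N(P)) hmod.
exists P; split => //.
by rewrite /normal (pHall_sub sylPG) -{1}eN subsetIr.
Qed.
End B1.

Section Bounds.
Local Open Scope group_scope.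
Variable gT : finGroupType.

Lemma psi_bound (G : {group gT}) c : (forall x, x \in G -> c * #[x] <= #|G|) ->
  c * psi G <= #|G| * #|G|.
Proof.
move=> h; rewrite /psi big_distrr /= -sum_nat_const.
by apply: leq_sum => x xG; apply: h.
Qed.

Lemma psi_bound_sub (G H : {group gT}) c : H \subset G ->
  (forall x, x \in G -> x \notin H -> c * #[x] <= #|G|) ->
  c * psi G <= c * psi H + (#|G| - #|H|) * #|G|.
Proof.
move=> sHG h; rewrite /psi (big_setID H) /= (setIidPr sHG) mulnDr leq_add2l.
have -> : (#|G| - #|H| = #|G :\: H|)%N by rewrite cardsD (setIidPr sHG).
rewrite big_distrr /= -sum_nat_const.
by apply: leq_sum => x; rewrite inE => /andP[xH xG]; exact: h.
Qed.

End Bounds.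

Section Main.
Local Open Scope group_scope.
Local Open Scope nat_scope.

Lemma main n : forall (gT : finGroupType) (G : {group gT}), #|G| <= n ->
  ~~ cyclic G -> 11 * psi G <= 7 * g #|G|.
Proof.
elim: n => [|N IH] gT G leG ncG.
  by move: (cardG_gt0 G); rewrite leqNgt ltnS leG.
set n := #|G|.
have n0 : 0 < n := cardG_gt0 G.
have n1 : 1 < n.
  rewrite ltn_neqAle n0 andbT; apply/eqP => e; move/negP: ncG; apply.
  by apply: (dvdn_prime_cyclic (p := 2)) => //; rewrite -/n -e.
set q := max_pdiv n.
have pq : prime q := max_pdiv_prime n1.
have hq : forall r, prime r -> r %| n -> r <= q.
  by move=> r pr rn; apply: max_pdiv_max; rewrite mem_primes pr n0 rn.
have qn : q %| n := max_pdiv_dvd n.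
have q0 : 0 < q := prime_gt0 pq.
have glow : 2 * (n * n) <= (q + 1) * g n by apply: g_lower.
case: (boolP [exists Q : {group gT}, [&& q.-Sylow(G) Q, Q <| G & cyclic Q]]).
  case/existsP=> Q /and3P[sylQ nQ cQ].
  have cardQ : #|Q| = n`_q := card_Hall sylQ.
  have nQG := normal_norm nQ.
  have sQG := normal_sub nQ.
  set m := #|G / Q|.
  have em : m = n`_q^'.
    apply/eqP; rewrite -(eqn_pmul2l (part_gt0 q n)) partnC //.
    by rewrite /m card_quotient // -cardQ Lagrange.
  have gsplit : g n = g #|Q| * g m by rewrite (g_split q n0) cardQ em.
  have qpi : q \in \pi(n) by rewrite pi_max_pdiv.
  have Q1 : 1 < #|Q| by rewrite cardQ p_part_gt1.
  have m0 : 0 < m by rewrite em part_gt0.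
  have en : n = #|Q| * m by rewrite cardQ em partnC.
  have mlt : m < n by rewrite en -{1}(mul1n m) ltn_pmul2r.
  have hb := caseA_bound pq sylQ nQ cQ.
  case: (boolP (cyclic (G / Q))) => cGQ; last first.
    have leGQ : #|G / Q| <= N by rewrite -ltnS; apply: leq_trans mlt leG.
    have h := IH _ (G / Q)%G leGQ cGQ.
    rewrite gsplit.
    have : 11 * psi G <= 11 * (g #|Q| * psi (G / Q)) by rewrite leq_mul2l hb orbT.
    move=> h2; apply: (leq_trans h2).
    rewrite mulnCA [7 * _]mulnCA leq_mul2l h orbT //.
  set K := ('C_G(Q) / Q)%G.
  have sKG : K \subset G / Q by apply: quotientS; apply: subsetIl.
  have nK : (K : {set _}) != G / Q.
    by apply/eqP => e; move/negP: ncG; apply; exact: (cent_full_cyclic sylQ nQ cQ cGQ e).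
  have pK : K \proper G / Q by rewrite properEneq nK sKG.
  have ltK : #|K| < m := proper_card pK.
  have dK : #|K| %| m := cardSg sKG.
  have psiGQ : psi (G / Q) = g m := psi_cyclic_group cGQ.
  have psiK : psi K = g #|K| := psi_cyclic_group (cyclicS sKG cGQ).
  have hmono : 3 * g #|K| <= g m := g_mono m0 dK ltK.
  have q3 : 3 <= q.
    have m1 : 1 < m by apply: leq_ltn_trans ltK; apply: cardG_gt0.
    have pr := pdiv_prime m1.
    have rm : pdiv m %| m := pdiv_dvd m.
    have rn : pdiv m %| n by rewrite en dvdn_mull.
    have rq := hq _ pr rn.
    have : pdiv m \in q^'.
      have := part_pnat q^' n; rewrite -em => pm.
      by move/pnatP: pm => /(_ m0 _ pr rm).
    rewrite !inE => neq.
    have lt : pdiv m < q by rewrite ltn_neqAle neq rq.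
    exact: leq_ltn_trans (prime_gt1 pr) lt.
  have : 0 < logn q n by rewrite logn_gt0.
  case ek : (logn q n) => [|k] // _.
  have cardQk : #|Q| = q ^ k.+1 by rewrite cardQ p_part ek.
  have hr := g_r k pq q3; rewrite -cardQk in hr.
  set T := (\sum_(c in G / Q :\: K) #[c])%N.
  have eT : g m = g #|K| + T by rewrite -psiGQ -psiK /psi (big_setID K) /= (setIidPr sKG).
  have hpsi : psi G <= g #|Q| * g #|K| + q * g (q ^ k) * T.
    rewrite (psi_decomp sylQ nQ) (big_setID K) /= (setIidPr sKG).
    apply: leq_add.
      rewrite -psiK /psi big_distrr /=; apply: leq_sum => c cK.
      rewrite mulnC leq_mul2r Sc_le ?orbT //.
      exact: (subsetP sKG).
    rewrite /T big_distrr /=; apply: leq_sum => c; rewrite inE => /andP[cK cGQ'].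
    by rewrite mulnC leq_mul2r (Sc_le2 pq sylQ nQ cQ cGQ' cK cardQk) orbT.
  rewrite gsplit eT.
  set gQ := g #|Q| in hpsi hr *.
  set gK := g #|K| in hpsi hmono eT *.
  set r := q * g (q ^ k) in hpsi hr *.
  have h1 : 7 * (r * T) <= 3 * (gQ * T) by rewrite !mulnA leq_mul2r hr orbT.
  have hh : 2 * gK <= T by move: hmono; rewrite eT; clear -eT; lia.
  have h2 : 2 * (gQ * gK) <= gQ * T by rewrite mulnCA leq_mul2l hh orbT.
  rewrite mulnDr; clear -hpsi h1 h2; lia.
move=> noQ.
have hx : forall x, x \in G -> q * #[x] <= n.
  move=> x xG; rewrite leqNgt; apply/negP => lt.
  have [Q [sylQ nQ cQ]] := B1 pq xG lt.
  by move/existsP: noQ; apply; exists Q; rewrite sylQ nQ cQ.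
case: (boolP [forall x in G, (q + 1) * #[x] <= n]).
  move/forall_inP => hall.
  have h1 := psi_bound hall; rewrite -/n in h1.
  have h2 : (q + 1) * (2 * psi G) <= (q + 1) * g n.
    by apply: leq_trans glow; rewrite mulnCA leq_mul2l h1 orbT.
  rewrite leq_pmul2l ?addn1 // in h2; lia.
rewrite negb_forall_in => /existsP[x /andP[xG]]; rewrite -ltnNge => ltx.
have ox : q * #[x] = n.
  have dv : #[x] %| n := order_dvdG xG.
  have [j ej] := dvdnP dv.
  have ox0 := order_gt0 x.
  have := hx x xG; rewrite ej => h1; move: ltx; rewrite ej => h2.
  have a : q <= j by nia.
  have b : j < q + 1 by nia.
  have -> : j = q by lia.
  by rewrite mulnC.
have [q5|q5] := leqP 5 q.
  have h1 := psi_bound hx; rewrite -/n in h1.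
  have h3 : q * (22 * psi G) <= q * (14 * g n).
    have : 11 * (q + 1) <= 14 * q by lia.
    nia.
  rewrite leq_pmul2l // in h3; lia.
have h0 : q * psi G <= q * g #[x] + (n - #[x]) * n.
  rewrite -psi_cycle; apply: psi_bound_sub; first by rewrite cycle_subG.
  by move=> y yG _; apply: hx.
have q23 : (q == 2) || (q == 3).
  have := prime_gt1 pq; move: pq q5; case: (q) => [|[|[|[|[|]]]]] //.
set K := #[x] in ox h0.
have K0 : 0 < K := order_gt0 x.
case/orP: q23 => /eqP eq; rewrite eq in ox h0.
  have p2 : 2.-nat n.
    apply/pnatP => // r pr rn; have := hq r pr rn; rewrite eq.
    have := prime_gt1 pr; rewrite !inE; lia.
  have en : n = 2 ^ logn 2 n by rewrite -p_part part_pnat_id.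
  case ea : (logn 2 n) en => [|b] en; first by rewrite en in n1.
  have eK : K = 2 ^ b by apply/eqP; rewrite -(eqn_pmul2l (isT : 0 < 2)) ox en expnS.
  have K2 : 2 <= K.
    rewrite leqNgt; apply/negP => lt2.
    have K1 : K = 1 by lia.
    have n2 : n = 2 by rewrite -ox K1.
    by move/negP: ncG; apply; apply: prime_cyclic; rewrite -/n n2.
  have e1 := g_two b; have e2 := g_two b.+1.
  rewrite -eK in e1; rewrite -en in e2.
  have e4 : 4 ^ b = K * K by rewrite eK -expnMn.
  have e5 : 4 ^ b.+1 = 4 * (K * K) by rewrite expnS e4.
  rewrite e4 in e1; rewrite e5 in e2.
  have M4 : 4 <= K * K by nia.
  rewrite -ox in h0.
  have h0' : psi G <= g K + K * K.
    have : 2 * K - K = K by lia.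
    move=> e; rewrite e in h0; nia.
  lia.
have hd := g_div pq n0 qn; rewrite eq in hd.
have e3 : n %/ 3 = K by rewrite -ox mulKn.
rewrite e3 /= in hd.
rewrite eq in glow.
rewrite -ox in h0 glow *.
have h0' : psi G <= g K + 2 * (K * K).
  have : 3 * K - K = 2 * K by lia.
  move=> e; rewrite e in h0; nia.
have glow' : 18 * (K * K) <= 4 * g (3 * K) by nia.
rewrite -ox in hd. lia.
Qed.
End Main.
Unset Implicit Arguments.

Theorem theorem1 (gT : finGroupType) (G : {group gT}) :
  ~~ cyclic G -> (11 * psi G <= 7 * psi_cyclic #|G|)%N.
Proof.
move=> ncG; rewrite psi_cyclicE ?cardG_gt0 //.
exact: (main (leqnn _) ncG).
Qed.
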